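(* Let $Z\in\Theta_2(r_0,s_0)$ and let $r_1<r_2<r_0$, $s_1<s_2<s_0$. Then for any $Y\in\Theta_2(r_1,s_1)$, $$\|P_{\Theta_2(r_2,s_2)}(Z)-Z\|_{\rm F}\le(\alpha+\beta+\alpha\beta)\,\|Y-Z\|_{\rm F},$$ where $\alpha=\sqrt{(s_0-s_2)/(s_0-s_1)}$ and $\beta=\sqrt{(r_0-r_2)/(r_0-r_1)}$.
   Context: For $A\in\mathbb{R}^{d_1\times d_2\times d_3}$, its slices are $A_{\cdot\cdot j_3}=(A_{j_1j_2j_3})_{j_1,j_2}\in\mathbb{R}^{d_1\times d_2}$, $1\le j_3\le d_3$; $\|\cdot\|_{\rm F}$ is the Frobenius norm. $\Theta_2(r,s)=\{A\in\mathbb{R}^{d_1\times d_2\times d_3}: \max_{j_3}\mathrm{rank}(A_{\cdot\cdot j_3})\le r,\ \sum_{j_3}\mathbb{1}(A_{\cdot\cdot j_3}\ne0)\le s\}$. $P_{\Theta_2(r,s)}(A)$ is defined in two steps: (1) replace each slice $A_{\cdot\cdot j_3}$ by its best rank-$r$ Frobenius-norm approximation $\tilde A_{\cdot\cdot j_3}$; (2) keep the $s$ slices with the largest $\|\tilde A_{\cdot\cdot j_3}\|_{\rm F}$ and set all other slices to zero. *)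

(* Defs.v *)
From mathcomp Require Import all_boot all_order all_algebra.
From mathcomp Require Import reals.
Set Implicit Arguments. Unset Strict Implicit. Unset Printing Implicit Defensive.
Import Order.TTheory GRing.Theory Num.Theory.
Local Open Scope ring_scope.

(* A tensor A in R^{d1 x d2 x d3} is represented by its family of slices
   A j3 = A_{..j3} : 'M[R]_(d1,d2), j3 : 'I_d3.  Entry A_{j1 j2 j3} = A j3 j1 j2. *)
Definition tensor (R : Type) (d1 d2 d3 : nat) := 'I_d3 -> 'M[R]_(d1, d2).

Section Defs.
Variables (R : realType) (d1 d2 d3 : nat).

Definition mxfrob (M : 'M[R]_(d1, d2)) : R :=
  Num.sqrt (\sum_(i < d1) \sum_(j < d2) M i j ^+ 2).

Definition tfrob (A : tensor R d1 d2 d3) : R :=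
  Num.sqrt (\sum_(k < d3) \sum_(i < d1) \sum_(j < d2) A k i j ^+ 2).

Definition tsub (A B : tensor R d1 d2 d3) : tensor R d1 d2 d3 :=
  fun k => A k - B k.

Definition Theta2 (r s : nat) (A : tensor R d1 d2 d3) : Prop :=
  (forall k, (\rank (A k) <= r)%N) /\ (#|[set k | A k != 0%R]| <= s)%N.

Definition best_rank_approx (r : nat) (M B : 'M[R]_(d1, d2)) : Prop :=
  (\rank B <= r)%N /\
  forall C : 'M[R]_(d1, d2), (\rank C <= r)%N -> mxfrob (M - B) <= mxfrob (M - C).

(* W is a (possible) value of P_{Theta_2(r,s)}(A): step (1) replaces each slice
   by a best rank-r approximation At k; step (2) keeps s slices with the largest
   Frobenius norms of At (all slices if s >= d3) and zeroes the others.
   Ties in either step may be resolved arbitrarily. *)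
Definition is_proj_Theta2 (r s : nat) (A W : tensor R d1 d2 d3) : Prop :=
  exists (At : tensor R d1 d2 d3) (S : {set 'I_d3}),
    (forall k, best_rank_approx r (A k) (At k)) /\
    #|S| = minn s d3 /\
    (forall j k, j \in S -> k \notin S -> mxfrob (At k) <= mxfrob (At j)) /\
    (forall k, W k = if k \in S then At k else 0%R).

End Defs.

(* Main.v *)
Require Import Defs.
From mathcomp Require Import all_boot all_order all_algebra.
From mathcomp Require Import reals.
From mathcomp Require Import complex spectral.
From mathcomp Require Import ring lra.
Import Order.TTheory GRing.Theory Num.Theory.
Local Open Scope ring_scope.
Set Implicit Arguments. Unset Strict Implicit. Unset Printing Implicit Defensive.

Section Main.
Variable R : realType.

Definition sqn m n (M : 'M[R]_(m, n)) := \sum_i \sum_j M i j ^+ 2.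

Lemma sqn_tr m n (M : 'M[R]_(m, n)) : sqn M = \tr (M *m M^T).
Proof.
rewrite /sqn /mxtrace; apply: eq_bigr => i _; rewrite !mxE.
by apply: eq_bigr => j _; rewrite !mxE expr2.
Qed.

Lemma sqn_ge0 m n (M : 'M[R]_(m, n)) : 0 <= sqn M.
Proof. by apply: sumr_ge0 => i _; apply: sumr_ge0 => j _; exact: sqr_ge0. Qed.

Lemma sqn_eq0 m n (M : 'M[R]_(m, n)) : sqn M = 0 -> M = 0.
Proof.
move=> /eqP; rewrite psumr_eq0; last first.
  by move=> i _; apply: sumr_ge0 => j _; exact: sqr_ge0.
move=> /allP H; apply/matrixP => i j; rewrite mxE.
have /eqP := H i (mem_index_enum i).
move/eqP; rewrite psumr_eq0; last by move=> k _; exact: sqr_ge0.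
move=> /allP/(_ j (mem_index_enum j)); rewrite sqrf_eq0 => /eqP ->. by [].
Qed.

Lemma rowsub1_tr k n (f : 'I_k -> 'I_n) : injective f ->
  rowsub f (1%:M : 'M[R]_n) *m (rowsub f 1%:M)^T = 1%:M.
Proof.
move=> finj; apply/matrixP => a c; rewrite !mxE /=.
rewrite (bigD1 (f a)) //= big1 ?addr0; last first.
  by move=> b hb; rewrite !mxE /= eq_sym (negbTE hb) mul0r.
by rewrite !mxE /= eqxx mul1r (inj_eq finj) eq_sym.
Qed.

Lemma rank_rowsub_unit k n (f : 'I_k -> 'I_n) (Q : 'M[R]_n) :
  injective f -> Q \in unitmx -> \rank (rowsub f Q) = k.
Proof.
move=> finj Qu; rewrite rowsubE mxrankMfree ?row_free_unit //.
apply/eqP; rewrite eqn_leq rank_leq_row /=.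
have := mxrankM_maxl (rowsub f (1%:M : 'M[R]_n)) (rowsub f 1%:M)^T.
by rewrite rowsub1_tr // mxrank1.
Qed.

Lemma witness m n (Z : 'M[R]_(m, n)) (Q : 'M[R]_n) (l : 'rV[R]_n)
  (T : {set 'I_n}) :
  Q \in unitmx -> Q *m (Z^T *m Z) = diag_mx l *m Q ->
  exists C : 'M[R]_(m, n), (\rank C <= #|T|)%N /\
     sqn (Z - C) = \sum_(i | i \notin T) l 0 i.
Proof.
move=> Qu QG.
set G := Z^T *m Z.
pose f := (@enum_val _ (mem T)).
have finj : injective f by exact: enum_val_inj.
pose A := rowsub f Q.
have rA : \rank A = #|T| by rewrite rank_rowsub_unit.
pose DT := diag_mx (\row_a l 0 (f a)).
have AG : A *m G = DT *m A.
  rewrite /A mul_rowsub_mx QG /DT !mul_diag_mx; apply/matrixP => a j.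
  by rewrite !mxE.
pose K := A *m A^T.
have Ku : K \in unitmx.
  rewrite -row_free_unit /row_free.
  have V0 : kermx K *m A = 0.
    apply: sqn_eq0; rewrite sqn_tr trmx_mul mulmxA -(mulmxA (kermx K)).
    by rewrite mulmx_ker mul0mx mxtrace0.
  have : kermx K = 0.
    by apply/eqP; rewrite -(mulmx_free_eq0 _ (B := A)) ?V0 // /row_free rA.
  move/(congr1 mxrank); rewrite mxrank_ker mxrank0 => /eqP.
  rewrite subn_eq0 => H; apply/eqP/eqP; rewrite eqn_leq H rank_leq_row //.
pose Pi := A^T *m invmx K *m A.
have KT : K^T = K by rewrite /K trmx_mul trmxK.
have PiT : Pi^T = Pi.
  by rewrite /Pi !trmx_mul trmxK trmx_inv KT mulmxA.
have GT : G^T = G by rewrite /G trmx_mul trmxK.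
have PiPi : Pi *m Pi = Pi.
  by rewrite /Pi !mulmxA -(mulmxA _ A) -/K mulmxKV.
have trGPi : \tr (G *m Pi) = \sum_(i in T) l 0 i.
  rewrite /Pi !mulmxA (mxtrace_mulC _ A) !mulmxA -(mulmxA A) -/G AG -(mulmxA DT A) -/K mulmxK //.
  rewrite mxtrace_diag [RHS]big_enum_val; apply: eq_bigr => a _; rewrite mxE. by [].
have trG : \tr G = \sum_i l 0 i.
  have -> : G = invmx Q *m diag_mx l *m Q.
    by rewrite -mulmxA -QG mulKmx.
  by rewrite mxtrace_mulC mulmxA mulmxV // mul1mx mxtrace_diag.
exists (Z *m Pi); split.
  apply: leq_trans (mxrankM_maxr _ _) _.
  by apply: leq_trans (mxrankM_maxr _ _) _; rewrite rA.
rewrite sqn_tr mxtrace_mulC.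
have -> : Z - Z *m Pi = Z *m (1%:M - Pi) by rewrite mulmxBr mulmx1.
have -> : (Z *m (1%:M - Pi))^T *m (Z *m (1%:M - Pi)) = (1%:M - Pi)^T *m G *m (1%:M - Pi).
  by rewrite trmx_mul !mulmxA.
rewrite mxtrace_mulC mulmxA.
have -> : (1%:M - Pi) *m (1%:M - Pi)^T = 1%:M - Pi.
  rewrite linearB /= trmx1 PiT mulmxBr mulmx1 mulmxBl mul1mx PiPi.
  by rewrite subrr subr0.
rewrite mulmxBl mul1mx linearB /= (mxtrace_mulC Pi) trGPi trG.
by rewrite (bigID (fun i => i \in T)) /= addrC addrK.
Qed.

Lemma ordered_set (I : finType) (a : I -> R) k : (k <= #|I|)%N ->
  exists T : {set I}, #|T| = k /\
    (forall j k', j \in T -> k' \notin T -> a k' <= a j).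
Proof.
elim: k => [_|k IH hk].
  by exists set0; split; rewrite ?cards0 // => j k'; rewrite inE.
have [T [cT oT]] := IH (ltnW hk).
have : (0 < #|~: T|)%N by rewrite cardsCs setCK cT subn_gt0.
move/card_gt0P => [x0 hx0].
have [x hx xmax] : exists2 x, x \in ~: T & forall i, i \in ~: T -> a i <= a x.
  by case: (arg_maxP a hx0) => i hi himax; exists i.
exists (x |: T); split.
  by rewrite cardsU1 -in_setC hx cT.
move=> j k'; rewrite !inE negb_or => /orP[/eqP ->|jT] /andP[nkx nkT].
  by apply: xmax; rewrite inE.
exact: oT.
Qed.

Lemma comb (I : finType) (a w : I -> R) (p0 p1 p2 : nat) (T : {set I}) :
  (p1 < p2)%N -> (p2 < p0)%N -> (forall i, 0 <= a i) ->
  (forall i, 0 <= w i <= 1) -> \sum_i w i <= p1%:R ->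
  (#|[set i | a i != 0%R]| <= p0)%N -> #|T| = minn p2 #|I| ->
  (forall j k, j \in T -> k \notin T -> a k <= a j) ->
  \sum_(i | i \notin T) a i <=
    (p0%:R - p2%:R) / (p0%:R - p1%:R) * \sum_i a i * (1 - w i).
Proof.
move=> h12 h20 a0 w01 sw cN cT ord.
have P12 : (p1%:R < p2%:R :> R) by rewrite ltr_nat.
have P20 : (p2%:R < p0%:R :> R) by rewrite ltr_nat.
have P1 : (0 <= p1%:R :> R) by [].
set X := \sum_i a i * (1 - w i).
have X0 : 0 <= X.
  apply: sumr_ge0 => i _; apply: mulr_ge0 => //.
  by have /andP[_ ?] := w01 i; rewrite subr_ge0.
have c0 : 0 <= (p0%:R - p2%:R) / (p0%:R - p1%:R) :> R.
  by apply: divr_ge0; rewrite subr_ge0; apply: ltW => //; apply: lt_trans P20.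
case: (leqP #|I| p2) => hI.
  have TT : T = setT.
    by apply/eqP; rewrite eqEcard subsetT cardsT cT leq_min hI leqnn.
  rewrite big1; first exact: mulr_ge0.
  by move=> i; rewrite TT inE.
have cT' : #|T| = p2 by rewrite cT; move/ltnW/minn_idPl: hI.
have : (0 < #|T|)%N by rewrite cT'; apply: leq_ltn_trans h12.
move/card_gt0P => [j0 hj0].
have [j hj jmin] : exists2 j, j \in T & forall i, i \in T -> a j <= a i.
  by case: (arg_minP a hj0) => i hi himin; exists i.
set t := a j.
have tout k : k \notin T -> a k <= t by move=> hk; exact: ord.
set L := \sum_(i | i \notin T) a i.
have [t0|tpos] := eqVneq t 0.
  rewrite /L big1; first exact: mulr_ge0.
  move=> i hi; by apply/eqP; rewrite eq_le a0 andbT -t0 tout.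
have tgt : 0 < t by rewrite lt_def tpos a0.
set N := [set i | a i != 0].
have TN : T \subset N.
  apply/subsetP => i hi; rewrite inE; apply/eqP => ai0.
  by have := jmin i hi; rewrite ai0 -/t leNgt tgt.
have cND : (#|N :\: T| <= p0 - p2)%N.
  rewrite cardsD (setIidPr TN) cT'; exact: leq_sub2r.
have HL : L <= t * (p0%:R - p2%:R).
  have : L <= \sum_(i in N :\: T) t.
    rewrite /L big_mkcond [X in _ <= X]big_mkcond /=; apply: ler_sum => i _.
    rewrite !inE; case: (boolP (i \in T)) => hiT //=.
    by case: eqP => [->|_] //; exact: tout.
  rewrite sumr_const => /le_trans; apply.
  rewrite -[t *+ _]mulr_natr; apply: ler_wpM2l; first exact: ltW.
  by rewrite -natrB ?ler_nat // ltnW.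
have HX : L + t * (p2%:R - p1%:R) <= X.
  have : \sum_i (t * (i \in T)%:R - t * w i + (i \notin T)%:R * a i) <= X.
    apply: ler_sum => i _; have /andP[w0 w1] := w01 i.
    case: (boolP (i \in T)) => hi /=.
      rewrite mulr1 mul0r addr0 -{1}(mulr1 t) -mulrBr; apply: ler_wpM2r; [by rewrite subr_ge0|].
      exact: jmin.
    rewrite mulr0 mul1r sub0r mulrBr mulr1 addrC lerD2l lerN2.
    exact: (ler_wpM2r w0 (tout i hi)).
  apply: le_trans; rewrite !big_split /= sumrN -!mulr_sumr.
  have -> : \sum_i ((i \in T)%:R : R) = p2%:R.
    rewrite -cT' -sum1_card natr_sum [RHS]big_mkcond /=; apply: eq_bigr => i _; by case: (i \in T).
  have -> : \sum_i ((i \notin T)%:R * a i) = L.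
    by rewrite /L [RHS]big_mkcond /=; apply: eq_bigr => i _; case: (i \in T) => /=; rewrite ?mul1r ?mul0r.
  have : t * \sum_i w i <= t * p1%:R by apply: ler_wpM2l => //; exact: ltW.
  rewrite mulrBr; lra.
apply: le_trans (ler_wpM2l c0 HX).
have D0 : p0%:R - p1%:R != 0 :> R by rewrite subr_eq0 gt_eqF //; apply: lt_trans P20.
have -> : (p0%:R - p2%:R) / (p0%:R - p1%:R) * (L + t * (p2%:R - p1%:R)) =
   L + (p2%:R - p1%:R) * (t * (p0%:R - p2%:R) - L) / (p0%:R - p1%:R).
  by field.
rewrite lerDl; apply: divr_ge0; last by rewrite subr_ge0; apply: ltW; apply: lt_trans P20.
by apply: mulr_ge0; rewrite subr_ge0 // ltW.
Qed.
Lemma CS (I : finType) (x y : I -> R) :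
  (\sum_i x i * y i) ^+ 2 <= (\sum_i x i ^+ 2) * (\sum_i y i ^+ 2).
Proof.
set a := \sum_i x i ^+ 2; set b := \sum_i y i ^+ 2; set c := \sum_i x i * y i.
have H t : 0 <= a + 2 * t * c + t ^+ 2 * b.
  have -> : a + 2 * t * c + t ^+ 2 * b = \sum_i (x i + t * y i) ^+ 2.
    transitivity (\sum_i (x i ^+ 2 + 2 * t * (x i * y i) + t ^+ 2 * y i ^+ 2)).
      by rewrite !big_split /= -!mulr_sumr.
    by apply: eq_bigr => i _; ring.
  by apply: sumr_ge0 => i _; exact: sqr_ge0.
have b0 : 0 <= b by apply: sumr_ge0 => i _; exact: sqr_ge0.
have [bz|bnz] := eqVneq b 0.
  have y0 i : y i = 0.
    apply/eqP; rewrite -sqrf_eq0; apply/eqP.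
    exact: (@psumr_eq0P _ _ xpredT (fun i => y i ^+ 2) (fun j _ => sqr_ge0 (y j)) bz i isT).
  rewrite /c big1 => [|i _]; last by rewrite y0 mulr0.
  by rewrite expr0n /= bz mulr0.
have bpos : 0 < b by rewrite lt_def bnz b0.
have := H (- c / b).
have -> : a + 2 * (- c / b) * c + (- c / b) ^+ 2 * b = a - c ^+ 2 / b.
  by field.
by rewrite subr_ge0 ler_pdivrMr.
Qed.

Lemma mink (I : finType) (x y : I -> R) :
  Num.sqrt (\sum_i (x i + y i) ^+ 2) <=
  Num.sqrt (\sum_i x i ^+ 2) + Num.sqrt (\sum_i y i ^+ 2).
Proof.
set a := \sum_i x i ^+ 2; set b := \sum_i y i ^+ 2; set c := \sum_i x i * y i.
have a0 : 0 <= a by apply: sumr_ge0 => i _; exact: sqr_ge0.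
have b0 : 0 <= b by apply: sumr_ge0 => i _; exact: sqr_ge0.
have E : \sum_i (x i + y i) ^+ 2 = a + 2 * c + b.
  transitivity (\sum_i (x i ^+ 2 + 2 * (x i * y i) + y i ^+ 2)).
    by apply: eq_bigr => i _; ring.
  by rewrite !big_split /= -!mulr_sumr.
have Hc : c <= Num.sqrt a * Num.sqrt b.
  rewrite -sqrtrM //; have [cle|cgt] := leP c 0.
    by apply: le_trans cle _; exact: sqrtr_ge0.
  by rewrite -(ger0_norm (ltW cgt)) -sqrtr_sqr ler_sqrt ?mulr_ge0 // CS.
have S : 0 <= Num.sqrt a + Num.sqrt b by rewrite addr_ge0 ?sqrtr_ge0.
rewrite -(ger0_norm S) -sqrtr_sqr ler_sqrt ?sqr_ge0 // E.
rewrite sqrrD !sqr_sqrtr //.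
rewrite mulr2n; lra.
Qed.

Local Open Scope sesquilinear_scope.
Local Notation C := (R[i]).
Local Notation cx M := (map_mx (real_complex R) M).

Definition nC m n (X : 'M[C]_(m, n)) := \tr (X *m X^t*).

Lemma conjR (x : R) : Num.conj_op ((x%:C)%C : C) = (x%:C)%C.
Proof. exact: conjc_real. Qed.

Lemma nCE m n (X : 'M[C]_(m, n)) : nC X = \sum_i \sum_j X i j * (X i j)^*.
Proof.
rewrite /nC /mxtrace; apply: eq_bigr => i _; rewrite !mxE.
by apply: eq_bigr => j _; rewrite !mxE.
Qed.

Lemma nC_ge0 m n (X : 'M[C]_(m, n)) : 0 <= nC X.
Proof.
by rewrite nCE; apply: sumr_ge0 => i _; apply: sumr_ge0 => j _; exact: mul_conjC_ge0.
Qed.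

Lemma nC_real m n (X : 'M[R]_(m, n)) : nC (cx X) = ((sqn X)%:C)%C.
Proof.
rewrite nCE /sqn rmorph_sum; apply: eq_bigr => i _.
rewrite rmorph_sum; apply: eq_bigr => j _; rewrite !mxE /=.
by rewrite conjR -rmorphM expr2.
Qed.

Lemma conj_real_tr m n (X : 'M[R]_(m, n)) : (cx X)^t* = cx (X^T).
Proof. by apply/matrixP => i j; rewrite !mxE /= conjR. Qed.

Lemma nC_mulU m n (X : 'M[C]_(m, n)) (U : 'M[C]_n) :
  U \is unitarymx -> nC (X *m U) = nC X.
Proof.
move=> /unitarymxP UU; rewrite /nC trmx_mul map_mxM mulmxA -(mulmxA X).
by rewrite UU mulmx1.
Qed.

Lemma nC_D m n (A B : 'M[C]_(m, n)) :
  nC (A + B) = nC A + nC B + \tr (A *m B^t*) + \tr (B *m A^t*).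
Proof.
rewrite /nC linearD map_mxD mulmxDl !mulmxDr !mxtraceD.
have H (a b c d : C) : a + b + (c + d) = a + d + b + c.
  by rewrite -!addrA; congr (_ + _); rewrite addrC -addrA addrC -!addrA.
exact: H.
Qed.


Lemma nC_proj m n (V : 'M[C]_(m, n)) (H : 'M[C]_n) :
  H^t* = H -> H *m H = H -> nC V = nC (V *m H) + nC (V *m (1%:M - H)).
Proof.
move=> HH HHH.
have H'H : (1%:M - H)^t* = 1%:M - H by rewrite linearB map_mxB /= trmx1 map_mx1 HH.
have -> : nC V = nC (V *m H + V *m (1%:M - H)).
  by rewrite mulmxBr mulmx1 addrC subrK.
rewrite nC_D !trmx_mul !map_mxM HH H'H.
rewrite !mulmxA -(mulmxA V H) -(mulmxA V (1%:M - H)).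
rewrite mulmxBr mulmx1 mulmxBl mul1mx HHH subrr mulmx0 mul0mx mxtrace0.
by rewrite mulmxBr mulmx1 HHH subrr mulmx0 mul0mx mxtrace0 !addr0.
Qed.

Lemma nC_mulH m n (M : 'M[C]_(m, n)) (H : 'M[C]_n) :
  H^t* = H -> H *m H = H -> nC (M *m H) = \tr (M^t* *m M *m H).
Proof.
move=> HH HHH; rewrite /nC trmx_mul map_mxM HH mulmxA -(mulmxA M) HHH.
by rewrite mxtrace_mulC mulmxA.
Qed.

Lemma Cre (x : C) : 0 <= x -> x = ((complex.Re x)%:C)%C.
Proof. by move=> /ger0_Im; case: x => a b /= ->. Qed.

Lemma spectral_real m n (Z : 'M[R]_(m, n)) :
  exists (Q : 'M[R]_n) (l : 'rV[R]_n),
  [/\ Q \in unitmx, Q *m (Z^T *m Z) = diag_mx l *m Q, (forall i, 0 <= l 0 i) &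
   forall Y : 'M[R]_(m, n), exists w : 'I_n -> R,
     [/\ forall i, 0 <= w i <= 1, \sum_i w i <= (\rank Y)%:R &
         \sum_i l 0 i * (1 - w i) <= sqn (Z - Y)]].
Proof.
pose Zc := cx Z.
pose Gc := Zc^t* *m Zc.
have GcE : Gc = cx (Z^T *m Z) by rewrite map_mxM /Gc conj_real_tr.
have GcH : Gc^t* = Gc by rewrite /Gc trmx_mul map_mxM trmxCK.
have Gnormal : Gc \is normalmx by apply/normalmxP; rewrite GcH.
pose P := spectralmx Gc; pose lc := spectral_diag Gc.
have PU : P \is unitarymx by exact: spectral_unitarymx.
have Pu : P \in unitmx by exact: spectral_unit.
have eqG : Gc = invmx P *m diag_mx lc *m P by exact/orthomx_spectralP.
have invP : invmx P = P^t* by exact: invmx_unitary.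
have PPt : P *m P^t* = 1%:M by exact/unitarymxP.
have PtP : P^t* *m P = 1%:M by rewrite -invP mulVmx.
pose M := Zc *m P^t*.
have MM : M^t* *m M = diag_mx lc.
  rewrite /M trmx_mul map_mxM trmxCK mulmxA -(mulmxA P) -/Gc eqG invP.
  by rewrite !mulmxA PPt mul1mx -mulmxA PPt mulmx1.
have lcE i : lc 0 i = \sum_k M k i * (M k i)^*.
  have := congr1 (fun X : 'M[C]_n => X i i) MM; rewrite /= mxE !mxE eqxx mulr1n => <-.
  by apply: eq_bigr => k _; rewrite !mxE mulrC.
have lc_ge0 i : 0 <= lc 0 i.
  by rewrite lcE; apply: sumr_ge0 => k _; exact: mul_conjC_ge0.
pose l := \row_i complex.Re (lc 0 i).
have lcR : lc = cx l by apply/rowP => i; rewrite !mxE -Cre.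
have Greal : Gc \is a realmx.
  by apply/mxOverP => i j; rewrite GcE mxE complex_real.
have Dreal : diag_mx lc \is a realmx.
  apply/mxOverP => i j; rewrite lcR mxE; apply: rpredMn; rewrite mxE.
  by apply/complex_realP; eexists.
have [Q' /andP[Q'r Q'u] simQ'] : similar_in [predI realmx & unitmx] Gc (diag_mx lc).
  apply: real_similar => //; exists P => //.
  by apply/similarP => //; rewrite {1}eqG !mulmxA mulmxV // mul1mx.
have Q'G : Q' *m Gc = diag_mx lc *m Q' by apply/similarP.
pose Q := map_mx (@complex.Re R) Q'.
have QE : cx Q = Q'.
  apply/matrixP => i j; rewrite !mxE.
  by have /mxOverP/(_ i j)/complex_realP[k ->] := Q'r.
exists Q, l; split.
- by rewrite -(map_unitmx (real_complex R)) QE.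
- apply: (map_mx_inj (f := real_complex R)).
  by rewrite map_mxM -GcE map_mxM map_diag_mx -lcR QE.
- by move=> i; rewrite -ler0c; have := lc_ge0 i; rewrite lcR mxE.
move=> Y.
pose Yc := cx Y; pose N := Yc *m P^t*.
have rN : \rank N = \rank Y.
  by rewrite mxrankMfree ?row_free_unit -?invP ?unitmx_inv // mxrank_map.
pose U := schmidt (row_base N).
have UU : U \is unitarymx by apply: schmidt_unitarymx; exact: rank_leq_col.
have UUt : U *m U^t* = 1%:M by apply/unitarymxP.
pose Q0 := U^t* *m U.
have NU : (N <= U)%MS.
  by rewrite (eqmx_schmidt_free (row_base_free N)) eq_row_base.
have NQ : N *m Q0 = N.
  have := mulmxKpV NU; set pU := pinvmx U => E.
  by rewrite -{1}E /Q0 mulmxA -(mulmxA _ U) UUt mulmx1.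
have Q0H : Q0^t* = Q0 by rewrite /Q0 trmx_mul map_mxM trmxCK.
have Q0Q0 : Q0 *m Q0 = Q0 by rewrite /Q0 mulmxA -(mulmxA _ U) UUt mulmx1.
have Q'H : (1%:M - Q0)^t* = 1%:M - Q0 by rewrite linearB map_mxB /= trmx1 map_mx1 Q0H.
have Q'Q' : (1%:M - Q0) *m (1%:M - Q0) = 1%:M - Q0.
  by rewrite mulmxBr mulmx1 mulmxBl mul1mx Q0Q0 subrr subr0.
have ZY : Zc - Yc = (M - N) *m P by rewrite mulmxBl -!mulmxA PtP !mulmx1.
have Q0ii i : Q0 i i = \sum_j (U j i)^* * U j i.
  by rewrite /Q0 mxE; apply: eq_bigr => j _; rewrite !mxE.
have Q0ge0 i : 0 <= Q0 i i.
  by rewrite Q0ii; apply: sumr_ge0 => j _; rewrite mulrC; exact: mul_conjC_ge0.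
pose w i := complex.Re (Q0 i i).
have wE i : Q0 i i = ((w i)%:C)%C by rewrite /w -Cre.
exists w; split.
- move=> i; apply/andP; split; first by rewrite -ler0c -wE.
  have : Q0 i i * Q0 i i <= Q0 i i.
    rewrite -{3}Q0Q0 [X in _ <= X]mxE (bigD1 i) //= lerDl.
    apply: sumr_ge0 => j _.
    have -> : Q0 j i = (Q0 i j)^* by rewrite -{1}Q0H !mxE.
    exact: mul_conjC_ge0.
  rewrite wE -rmorphM lecR => h; have := Q0ge0 i; rewrite wE ler0c => h0.
  by nra.
- have trQ0 : \tr Q0 = (\rank N)%:R by rewrite /Q0 mxtrace_mulC UUt mxtrace1.
  have : ((\sum_i w i)%:C)%C = (((\rank N)%:R : R)%:C)%C.
    by rewrite rmorph_sum rmorph_nat -trQ0 /mxtrace; apply: eq_bigr => i _; rewrite wE.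
  by move/complexI => ->; rewrite rN.
have key : ((sqn (Z - Y))%:C)%C =
    nC ((M - N) *m Q0) + ((\sum_i l 0 i * (1 - w i))%:C)%C.
  rewrite -nC_real map_mxB ZY nC_mulU // (nC_proj (M - N) Q0H Q0Q0).
  congr (_ + _).
  rewrite mulmxBl (mulmxBr N) mulmx1 NQ subrr subr0 nC_mulH // MM.
  rewrite mul_diag_mx /mxtrace rmorph_sum; apply: eq_bigr => i _.
  rewrite mxE [(1%:M - Q0) i i]mxE [1%:M i i]mxE eqxx [(- Q0) i i]mxE wE lcR mxE /=.
  by rewrite rmorphM rmorphB rmorph1.
by rewrite -lecR key lerDr nC_ge0.
Qed.


Lemma count_rank n (l : 'rV[R]_n) :
  (#|[set i | l 0%R i != 0%R]| <= \rank (diag_mx l))%N.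
Proof.
set S := [set i | l 0%R i != 0%R].
pose f := @enum_val _ (mem S).
have finj : injective f by exact: enum_val_inj.
have fS a : l 0 (f a) != 0 by have := enum_valP a; rewrite inE.
pose A := rowsub f (diag_mx l).
pose B := rowsub f (diag_mx (\row_i (l 0 i)^-1)).
have AB : A *m B^T = 1%:M.
  apply/matrixP => a c; rewrite !mxE.
  rewrite (bigD1 (f a)) //= big1 ?addr0; last first.
    by move=> b hb; rewrite !mxE /= eq_sym (negbTE hb) mulr0n mul0r.
  rewrite !mxE /= eqxx mulr1n (inj_eq finj) eq_sym.
  by case: eqP => [->|_]; rewrite ?mulr1n ?mulfV ?mulr0n ?mulr0.
have : (#|S| <= \rank A)%N.
  by have := mxrankM_maxl A B^T; rewrite AB mxrank1.
move/leq_trans; apply.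
by rewrite /A rowsubE; exact: mxrankM_maxr.
Qed.

Lemma rank_diag_le m n (Z : 'M[R]_(m, n)) (Q : 'M[R]_n) (l : 'rV[R]_n) :
  Q \in unitmx -> Q *m (Z^T *m Z) = diag_mx l *m Q ->
  (\rank (diag_mx l) <= \rank Z)%N.
Proof.
move=> Qu QG.
have -> : diag_mx l = Q *m (Z^T *m Z) *m invmx Q by rewrite QG mulmxK.
apply: leq_trans (mxrankM_maxl _ _) _.
apply: leq_trans (mxrankM_maxr _ _) _.
exact: mxrankM_maxr.
Qed.

Lemma mat_main (m n r0 r1 r2 : nat) (Z Y B : 'M[R]_(m, n)) :
  (r1 < r2)%N -> (r2 < r0)%N -> (\rank Z <= r0)%N -> (\rank Y <= r1)%N ->
  best_rank_approx r2 Z B ->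
  sqn (Z - B) <= (r0%:R - r2%:R) / (r0%:R - r1%:R) * sqn (Z - Y).
Proof.
move=> h12 h20 rZ rY [_ hB].
have [Q [l [Qu QG l0 HY]]] := spectral_real Z.
have [T [cT oT]] := ordered_set (fun i => l 0 i) (geq_minr r2 #|'I_n|).
have [C [rC eC]] := witness T Qu QG.
have [w [w01 sw lw]] := HY Y.
have h1 : sqn (Z - B) <= sqn (Z - C).
  have rC' : (\rank C <= r2)%N by apply: leq_trans rC _; rewrite cT geq_minl.
  by have := hB C rC'; rewrite /mxfrob ler_sqrt //; exact: sqn_ge0.
apply: le_trans h1 _; rewrite eC.
have c0 : 0 <= (r0%:R - r2%:R) / (r0%:R - r1%:R) :> R.
  apply: divr_ge0; rewrite subr_ge0 ler_nat ltnW //; exact: ltn_trans h20.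
have sw' : \sum_i w i <= r1%:R.
  by apply: le_trans sw _; rewrite ler_nat.
have cnt : (#|[set i | l 0%R i != 0%R]| <= r0)%N.
  exact: leq_trans (count_rank l) (leq_trans (rank_diag_le Qu QG) rZ).
apply: le_trans (comb h12 h20 l0 w01 sw' cnt cT oT) _.
by apply: ler_wpM2l.
Qed.

End Main.

Section Tensor.
Variable R : realType.
Variables d1 d2 d3 : nat.

Definition tsq (A : tensor R d1 d2 d3) := \sum_k sqn (A k).

Lemma tfrobE (A : tensor R d1 d2 d3) : tfrob A = Num.sqrt (tsq A).
Proof. by []. Qed.

Lemma tsqE (A : tensor R d1 d2 d3) :
  tsq A = \sum_(p : 'I_d3 * ('I_d1 * 'I_d2)) A p.1 p.2.1 p.2.2 ^+ 2.
Proof.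
rewrite /tsq /sqn.
transitivity (\sum_k \sum_(q : 'I_d1 * 'I_d2) A k q.1 q.2 ^+ 2).
  by apply: eq_bigr => k _; rewrite pair_big.
by rewrite pair_big.
Qed.

Lemma sqn_opp m n (M : 'M[R]_(m, n)) : sqn (- M) = sqn M.
Proof. by rewrite /sqn; apply: eq_bigr => i _; apply: eq_bigr => j _; rewrite mxE sqrrN. Qed.

Lemma sqn_sym m n (M N : 'M[R]_(m, n)) : sqn (M - N) = sqn (N - M).
Proof. by rewrite -sqn_opp opprB. Qed.

Lemma sqn0 m n : sqn (0 : 'M[R]_(m, n)) = 0.
Proof. by rewrite /sqn big1 // => i _; rewrite big1 // => j _; rewrite mxE expr0n. Qed.

Lemma tmink (A B D : tensor R d1 d2 d3) :
  tfrob (tsub A B) <= tfrob (tsub A D) + tfrob (tsub D B).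
Proof.
rewrite !tfrobE !tsqE.
have -> : \sum_(p : 'I_d3 * ('I_d1 * 'I_d2)) tsub A B p.1 p.2.1 p.2.2 ^+ 2 =
  \sum_(p : 'I_d3 * ('I_d1 * 'I_d2))
     (tsub A D p.1 p.2.1 p.2.2 + tsub D B p.1 p.2.1 p.2.2) ^+ 2.
  by apply: eq_bigr => p _; rewrite /tsub !mxE addrA subrK.
exact: mink.
Qed.

Lemma tfrob_sym (A B : tensor R d1 d2 d3) : tfrob (tsub A B) = tfrob (tsub B A).
Proof.
rewrite !tfrobE /tsq; congr Num.sqrt; apply: eq_bigr => k _; exact: sqn_sym.
Qed.

End Tensor.

Unset Implicit Arguments.

Theorem lemma2 (R : realType) (d1 d2 d3 : nat) (r0 r1 r2 s0 s1 s2 : nat)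
  (Z Y W : tensor R d1 d2 d3) :
  (r1 < r2)%N -> (r2 < r0)%N -> (s1 < s2)%N -> (s2 < s0)%N ->
  Theta2 r0 s0 Z -> Theta2 r1 s1 Y ->
  is_proj_Theta2 r2 s2 Z W ->
  let alpha := Num.sqrt ((s0%:R - s2%:R) / (s0%:R - s1%:R)) : R in
  let beta := Num.sqrt ((r0%:R - r2%:R) / (r0%:R - r1%:R)) : R in
  tfrob (tsub W Z) <= (alpha + beta + alpha * beta) * tfrob (tsub Y Z).
Proof.
move=> h12 h20 hs12 hs20 HZ HY HP; cbv zeta.
set alpha := Num.sqrt ((s0%:R - s2%:R) / (s0%:R - s1%:R)) : R.
set beta := Num.sqrt ((r0%:R - r2%:R) / (r0%:R - r1%:R)) : R.
case: HZ => rZ sZ; case: HY => rY sY.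
case: HP => At [S [hAt [cS [oS hW]]]].
set e := tfrob (tsub Y Z).
pose a k := sqn (At k).
have a0 k : 0 <= a k by exact: sqn_ge0.
set c1 := (s0%:R - s2%:R) / (s0%:R - s1%:R) : R.
set c2 := (r0%:R - r2%:R) / (r0%:R - r1%:R) : R.
have c10 : 0 <= c1.
  apply: divr_ge0; rewrite subr_ge0 ler_nat ltnW //; exact: ltn_trans hs20.
have c20 : 0 <= c2.
  apply: divr_ge0; rewrite subr_ge0 ler_nat ltnW //; exact: ltn_trans h20.
have E4 : tsq (tsub At Z) <= c2 * tsq (tsub Y Z).
  rewrite /tsq mulr_sumr; apply: ler_sum => k _; rewrite /tsub sqn_sym (sqn_sym (Y k)).
  exact: mat_main h12 h20 (rZ k) (rY k) (hAt k).
have E3 : tsq (tsub W At) = \sum_(k | k \notin S) a k.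
  rewrite /tsq (bigID (fun k => k \in S)) /= big1 ?add0r => [|k kS].
    by apply: eq_bigr => k kS; rewrite /tsub hW (negbTE kS) sub0r sqn_opp.
  by rewrite /tsub hW kS subrr sqn0.
pose w k : R := (Y k != 0)%:R.
have E2 : \sum_k a k * (1 - w k) <= tsq (tsub Y At).
  apply: ler_sum => k _; rewrite /w /tsub.
  case: (eqVneq (Y k) 0) => [->|nz] /=.
    by rewrite subr0 mulr1 sub0r sqn_opp.
  by rewrite subrr mulr0; exact: sqn_ge0.
have w01 k : 0 <= w k <= 1 by rewrite /w; case: (Y k != 0); rewrite /= ?lexx ?ler01.
have sw : \sum_k w k <= s1%:R.
  have -> : \sum_k w k = #|[set k | Y k != 0%R]|%:R.
    rewrite -sum1_card natr_sum [RHS]big_mkcond /=; apply: eq_bigr => k _.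
    by rewrite inE /w; case: (Y k != 0).
  by rewrite ler_nat.
have Z0 k : Z k = 0 -> At k = 0.
  move=> zk; have [_ hb] := hAt k.
  have r0' : (\rank (0%R : 'M[R]_(d1, d2)) <= r2)%N by rewrite mxrank0.
  have := hb 0 r0'; rewrite zk subrr sub0r /mxfrob.
  rewrite -/(sqn _) -/(sqn _) sqn_opp sqn0 sqrtr0 => h.
  have : sqn (At k) = 0.
    apply/eqP; rewrite eq_le sqn_ge0 andbT -sqrtr_eq0 eq_le h sqrtr_ge0 //.
  exact: sqn_eq0.
have cnt : (#|[set k | a k != 0%R]| <= s0)%N.
  apply: leq_trans _ sZ; apply: subset_leq_card; apply/subsetP => k.
  rewrite !inE; apply: contra => /eqP zk; by rewrite /a Z0 // sqn0.
have cS' : #|S| = minn s2 #|'I_d3| by rewrite card_ord.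
have ord j k : j \in S -> k \notin S -> a k <= a j.
  by move=> jS kS; have := oS j k jS kS; rewrite /mxfrob ler_sqrt //; exact: sqn_ge0.
have F1 : tfrob (tsub W At) <= alpha * tfrob (tsub Y At).
  rewrite !tfrobE /alpha -/c1 -sqrtrM // ler_sqrt; last first.
    by apply: mulr_ge0 => //; apply: sumr_ge0 => k _; exact: sqn_ge0.
  rewrite E3; apply: le_trans (comb hs12 hs20 a0 w01 sw cnt cS' ord) _.
  exact: ler_wpM2l.
have F2 : tfrob (tsub At Z) <= beta * e.
  rewrite /e !tfrobE /beta -/c2 -sqrtrM // ler_sqrt //.
  by apply: mulr_ge0 => //; apply: sumr_ge0 => k _; exact: sqn_ge0.
have F3 : tfrob (tsub Y At) <= e + tfrob (tsub At Z).
  by rewrite (tfrob_sym At Z); exact: tmink.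
have F0 : tfrob (tsub W Z) <= tfrob (tsub W At) + tfrob (tsub At Z) by exact: tmink.
have al0 : 0 <= alpha by exact: sqrtr_ge0.
have be0 : 0 <= beta by exact: sqrtr_ge0.
have G1 : alpha * tfrob (tsub Y At) <= alpha * e + alpha * tfrob (tsub At Z).
  by rewrite -mulrDr; exact: ler_wpM2l.
have G2 : alpha * tfrob (tsub At Z) <= alpha * (beta * e) by exact: ler_wpM2l.
have -> : (alpha + beta + alpha * beta) * e = alpha * e + beta * e + alpha * (beta * e).
  by rewrite !mulrDl mulrA.
lra.
Qed.
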